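(* For all $L,R\in\Lambda^{\mathrm{rb}}$, if $L\to R$ then $\operatorname{RB}(L)\equiv\operatorname{RB}(R)$ or $\operatorname{RB}(L)\to_\beta\operatorname{RB}(R)$.
   Context: **$\lambda$-terms and contexts.** $\Lambda$ is the set of untyped $\lambda$-terms (up to $\alpha$-equivalence), and $\to_\beta$ is one-step $\beta$-reduction. A context $C[\,]$ is a $\lambda$-term with exactly one hole $[\,]$. $C[M]$ is the result of filling the hole with $M$; binders of $C$ may capture free variables of $M$. We write $M\,\vec N$ for $M\,N_1\cdots N_n$ (left-associated), where $n\ge 0$. **Atoms and $\Lambda^\bullet$.** For each $M\in\Lambda$ there is a new formal symbol $\underline{M}$, called an atom. Atoms are constants: they have no free variables, and substitution leaves them unchanged. For $M\in\Lambda$, $M^\bullet$ replaces each free occurrence of each variable $x$ in $M$ by the atom $\underline{x}$. Set $\Lambda^\bullet=\{M^\bullet: M\in\Lambda\}$, with substitution extended to these terms by treating atoms as constants. **The set $\Lambda^{\mathrm{rb}}$.** It is the least set such that: 1. $\underline{M}\in\Lambda^{\mathrm{rb}}$ for all $M\in\Lambda$; 2. $\langle C[\,],M\rangle\in\Lambda^{\mathrm{rb}}$ for every context $C[\,]$ and every $M\in\Lambda^\bullet$; 3. $\langle C[\,],M\,\vec N\rangle\in\Lambda^{\mathrm{rb}}$ for every context $C[\,]$, every $M\in\Lambda^{\mathrm{rb}}$ and all $N_1,\dots,N_n\in\Lambda^\bullet$. **The relation $\to$ on $\Lambda^{\mathrm{rb}}$.** It is the least relation satisfying: - (R1) $\langle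 C[\,],\underline{M}\rangle\to\underline{C[M]}$ for $M\in\Lambda$; - (R2) $\langle C[\,],\lambda x.M\rangle\to\langle C[\lambda x.[\,]],M[x:=\underline{x}]\rangle$ for $\lambda x.M\in\Lambda^\bullet$; - (R3) $\langle C[\,],\underline{M}\,N_0\,\vec N\rangle\to\langle C[\,],\langle M\,[\,],N_0\rangle\,\vec N\rangle$ for $M\in\Lambda$ and $N_0,\vec N\in\Lambda^\bullet$; - (R4) $\langle C[\,],(\lambda x.M)\,N_0\,\vec N\rangle\to\langle C[\,],M[x:=N_0]\,\vec N\rangle$ for $\lambda x.M,N_0,\vec N\in\Lambda^\bullet$; - (R5) if $M\to M'$ with $M,M'\in\Lambda^{\mathrm{rb}}$, then $\langle C[\,],M\,\vec N\rangle\to\langle C[\,],M'\,\vec N\rangle$ for every context $C[\,]$ and $\vec N\in\Lambda^\bullet$. **Read-back.** $\operatorname{RB}:\Lambda^\bullet\cup\Lambda^{\mathrm{rb}}\to\Lambda$ is defined by: - $\operatorname{RB}(\langle C[\,],M\,\vec N\rangle)\equiv C[\operatorname{RB}(M)\,\operatorname{RB}(N_1)\cdots\operatorname{RB}(N_n)]$ for $M\in\Lambda^\bullet\cup\Lambda^{\mathrm{rb}}$ and $\vec N\in\Lambda^\bullet$; - $\operatorname{RB}(P\,Q)\equiv\operatorname{RB}(P)\,\operatorname{RB}(Q)$ for $P,Q\in\Lambda^\bullet$; - $\operatorname{RB}(\lambda x.P)\equiv\lambda x.\operatorname{RB}(P[x:=\underline{x}])$ for $\lambda x.P\in\Lambda^\bullet$;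 - $\operatorname{RB}(\underline{P})\equiv P$ for $P\in\Lambda$. *)

(* Defs.v *)
(* Untyped lambda-terms in the locally nameless representation:
   bound variables are de Bruijn indices, free variables are names (nat).
   Syntactic equality of locally closed terms is alpha-equivalence. *)
From Stdlib Require Import List Arith.
Import ListNotations.

Definition var := nat.

(** * Lambda (the set Λ = locally closed terms) *)
Inductive term : Type :=
| bvar : nat -> term
| fvar : var -> term
| app  : term -> term -> term
| lam  : term -> term.

Fixpoint lc_at (k : nat) (t : term) : bool :=
  match t with
  | bvar i => i <? k
  | fvar _ => true
  | app t u => lc_at k t && lc_at k u
  | lam t => lc_at (S k) t
  end.

Definition lc (t : term) : Prop := lc_at 0 t = true.

Fixpoint open_rec (k : nat) (u : term) (t : term) : term :=
  match t with
  | bvar i => if i =? k then u else bvar i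
  | fvar x => fvar x
  | app t1 t2 => app (open_rec k u t1) (open_rec k u t2)
  | lam t1 => lam (open_rec (S k) u t1)
  end.

Definition open (t u : term) : term := open_rec 0 u t.

Fixpoint close_rec (k : nat) (x : var) (t : term) : term :=
  match t with
  | bvar i => bvar i
  | fvar y => if y =? x then bvar k else fvar y
  | app t1 t2 => app (close_rec k x t1) (close_rec k x t2)
  | lam t1 => lam (close_rec (S k) x t1)
  end.

Fixpoint fv (t : term) : list var :=
  match t with
  | bvar _ => []
  | fvar x => [x]
  | app t u => fv t ++ fv u
  | lam t => fv t
  end.

(** * Contexts: lambda-terms with exactly one hole; binders are named and
    capture free variables of the term filled in. *)
Inductive ctx : Type :=
| Hole : ctx
| CAppL : ctx -> term -> ctx
| CAppR : term -> ctx -> ctx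
| CLam  : var -> ctx -> ctx.

Fixpoint ctx_ok (C : ctx) : Prop :=
  match C with
  | Hole => True
  | CAppL C t => ctx_ok C /\ lc t
  | CAppR t C => lc t /\ ctx_ok C
  | CLam _ C => ctx_ok C
  end.

Fixpoint fill (C : ctx) (M : term) : term :=
  match C with
  | Hole => M
  | CAppL C t => app (fill C M) t
  | CAppR t C => app t (fill C M)
  | CLam x C => lam (close_rec 0 x (fill C M))
  end.

Fixpoint ctx_plug (C : ctx) (D : ctx) : ctx :=
  match C with
  | Hole => D
  | CAppL C t => CAppL (ctx_plug C D) t
  | CAppR t C => CAppR t (ctx_plug C D)
  | CLam x C => CLam x (ctx_plug C D)
  end.

Definition beta (M N : term) : Prop :=
  exists (C : ctx) (P Q : term),
    ctx_ok C /\ lc (lam P) /\ lc Q /\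
    M = fill C (app (lam P) Q) /\ N = fill C (open P Q).

(** * Extended terms: atoms (underline M for M ∈ Λ, constants) and
    pairs <C[], M>.  Λ^• and Λ^rb are subsets of these. *)
Inductive xterm : Type :=
| xbvar : nat -> xterm
| xatom : term -> xterm
| xapp  : xterm -> xterm -> xterm
| xlam  : xterm -> xterm
| xpair : ctx -> xterm -> xterm.

Definition xapps (M : xterm) (Ns : list xterm) : xterm :=
  fold_left xapp Ns M.

Fixpoint xopen_rec (k : nat) (u : xterm) (t : xterm) : xterm :=
  match t with
  | xbvar i => if i =? k then u else xbvar i
  | xatom M => xatom M
  | xapp t1 t2 => xapp (xopen_rec k u t1) (xopen_rec k u t2)
  | xlam t1 => xlam (xopen_rec (S k) u t1)
  | xpair C t1 => xpair C (xopen_rec k u t1)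
  end.

Definition xopen (t u : xterm) : xterm := xopen_rec 0 u t.

(* names x such that an atom mentioning x occurs in t
   (for t ∈ Λ^•: exactly the x with underline x occurring in t) *)
Fixpoint atom_names (t : xterm) : list var :=
  match t with
  | xbvar _ => []
  | xatom M => fv M
  | xapp t u => atom_names t ++ atom_names u
  | xlam t => atom_names t
  | xpair _ t => atom_names t
  end.

Fixpoint bullet (M : term) : xterm :=
  match M with
  | bvar i => xbvar i
  | fvar x => xatom (fvar x)
  | app t u => xapp (bullet t) (bullet u)
  | lam t => xlam (bullet t)
  end.

Definition Lbullet (t : xterm) : Prop := exists M, lc M /\ t = bullet M.

Inductive Lrb : xterm -> Prop :=
| rb_atom : forall M, lc M -> Lrb (xatom M)
| rb_bul : forall C M, ctx_ok C -> Lbullet M -> Lrb (xpair C M)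
| rb_spine : forall C M Ns, ctx_ok C -> Lrb M -> Forall Lbullet Ns ->
    Lrb (xpair C (xapps M Ns)).

(* In R2 the name x of the bound variable of
   λx.M ∈ Λ^• is any name not occurring as an atom in the body (these are
   exactly the representatives of the alpha-class of λx.M ∈ Λ^•). *)
Inductive rbstep : xterm -> xterm -> Prop :=
| R1 : forall C M, ctx_ok C -> lc M ->
    rbstep (xpair C (xatom M)) (xatom (fill C M))
| R2 : forall C M x, ctx_ok C -> Lbullet (xlam M) ->
    ~ In x (atom_names M) ->
    rbstep (xpair C (xlam M))
           (xpair (ctx_plug C (CLam x Hole)) (xopen M (xatom (fvar x))))
| R3 : forall C M N0 Ns, ctx_ok C -> lc M -> Lbullet N0 -> Forall Lbullet Ns ->
    rbstep (xpair C (xapps (xatom M) (N0 :: Ns)))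
           (xpair C (xapps (xpair (CAppR M Hole) N0) Ns))
| R4 : forall C M N0 Ns, ctx_ok C -> Lbullet (xlam M) -> Lbullet N0 ->
    Forall Lbullet Ns ->
    rbstep (xpair C (xapps (xlam M) (N0 :: Ns)))
           (xpair C (xapps (xopen M N0) Ns))
| R5 : forall C M M' Ns, Lrb M -> Lrb M' -> rbstep M M' ->
    ctx_ok C -> Forall Lbullet Ns ->
    rbstep (xpair C (xapps M Ns)) (xpair C (xapps M' Ns)).

(* Read-back RB : Λ^• ∪ Λ^rb -> Λ.  In the locally nameless representation
   the clause RB(λx.P) = λx.RB(P[x:=underline x]) (x fresh) is simply
   RB(λ P) = λ RB(P), bound indices being kept. *)
Fixpoint RB (t : xterm) : term :=
  match t with
  | xbvar i => bvar i
  | xatom M => M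
  | xapp t u => app (RB t) (RB u)
  | xlam t => lam (RB t)
  | xpair C t => fill C (RB t)
  end.

(* Main.v *)
Require Import Defs.
From Stdlib Require Import List Arith Lia.
Import ListNotations.

Lemma fill_plug C D t : fill (ctx_plug C D) t = fill C (fill D t).
Proof. induction C; simpl; congruence. Qed.

Lemma ok_plug C D : ctx_ok C -> ctx_ok D -> ctx_ok (ctx_plug C D).
Proof. induction C; simpl; tauto. Qed.

Fixpoint actx (l : list term) (D : ctx) : ctx :=
  match l with [] => D | a :: l => actx l (CAppL D a) end.

Lemma fill_actx l D t : fill (actx l D) t = fold_left Defs.app l (fill D t).
Proof. revert D; induction l; intros D; simpl; auto. Qed.

Lemma ok_actx l D : ctx_ok D -> Forall lc l -> ctx_ok (actx l D).
Proof. revert D; induction l; intros D HD Hl; simpl; auto.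
  inversion Hl; subst. apply IHl; simpl; auto. Qed.

Lemma fill_actx0 l t : fold_left Defs.app l t = fill (actx l Hole) t.
Proof. rewrite fill_actx; reflexivity. Qed.

Lemma RB_xapps M Ns : RB (xapps M Ns) = fold_left Defs.app (map RB Ns) (RB M).
Proof. unfold xapps. revert M; induction Ns; intros M; simpl; auto. Qed.

Lemma RB_bullet N : RB (bullet N) = N.
Proof. induction N; simpl; congruence. Qed.

Lemma RB_open N k u : RB (xopen_rec k u (bullet N)) = open_rec k (RB u) N.
Proof. revert k; induction N; intros k; simpl; try congruence.
  destruct (n =? k); reflexivity. Qed.

Lemma atom_names_bullet N : atom_names (bullet N) = fv N.
Proof. induction N; simpl; congruence. Qed.

Lemma close_open N k x : ~ In x (fv N) -> close_rec k x (open_rec k (fvar x) N) = N.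
Proof. revert k; induction N; intros k H; simpl in *.
  - destruct (n =? k) eqn:E; simpl. apply Nat.eqb_eq in E; subst. rewrite Nat.eqb_refl; auto. auto.
  - destruct (v =? x) eqn:E; auto. apply Nat.eqb_eq in E; subst. tauto.
  - rewrite in_app_iff in H. rewrite IHN1, IHN2; tauto.
  - rewrite IHN; auto.
Qed.

Lemma bullet_lam P M : bullet P = xlam M -> exists P0, P = lam P0 /\ M = bullet P0.
Proof. destruct P; simpl; intro H; inversion H; eauto. Qed.

Lemma Lbullet_lc N : Lbullet N -> lc (RB N).
Proof. intros [P [HP ->]]. rewrite RB_bullet; auto. Qed.

Lemma Forall_lc Ns : Forall Lbullet Ns -> Forall lc (map RB Ns).
Proof. induction 1; simpl; constructor; auto. apply Lbullet_lc; auto. Qed.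

Lemma beta_ctx D a b : ctx_ok D -> beta a b -> beta (fill D a) (fill D b).
Proof. intros HD [C [P [Q [HC [HP [HQ [-> ->]]]]]]].
  exists (ctx_plug D C), P, Q. rewrite !fill_plug. repeat split; auto. apply ok_plug; auto. Qed.

Theorem proposition2 (L R : xterm) :
  Lrb L -> Lrb R -> rbstep L R ->
  RB L = RB R \/ beta (RB L) (RB R).
Proof.
  intros _ _ H. induction H.
  - left; reflexivity.
  - left. simpl. rewrite fill_plug. simpl. f_equal. f_equal.
    destruct H0 as [P [HP HPe]]. symmetry in HPe; apply bullet_lam in HPe as [P0 [-> ->]].
    rewrite atom_names_bullet in H1. unfold xopen. rewrite RB_open. simpl.
    rewrite close_open, RB_bullet; auto.
  - left. simpl. rewrite !RB_xapps. reflexivity.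
  - right. simpl. rewrite !RB_xapps. simpl.
    destruct H0 as [P [HP HPe]]. symmetry in HPe; apply bullet_lam in HPe as [P0 [-> ->]].
    pose proof (Lbullet_lc _ H1) as HN0.
    destruct H1 as [Q [HQ ->]]. unfold xopen. rewrite RB_open, !RB_bullet.
    rewrite RB_bullet in HN0.
    rewrite !(fill_actx0 (map RB Ns)). rewrite <- !fill_plug.
    apply beta_ctx. apply ok_plug; auto. apply ok_actx; simpl; auto. apply Forall_lc; auto.
    exists Hole, P0, Q. simpl. repeat split; auto.
  - simpl. rewrite !RB_xapps.
    rewrite !(fill_actx0 (map RB Ns)). rewrite <- !fill_plug.
    destruct IHrbstep as [E | B]; [left; rewrite E; reflexivity | right].
    apply beta_ctx; auto. apply ok_plug; auto. apply ok_actx; simpl; auto. apply Forall_lc; auto.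
Qed.
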